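(* Let $n,t\geq 3$ be integers. If $t$ is odd, then for all $\mathbf u,\mathbf v\in D_{n,t-2}$ and $\mathbf w\in D^*_{n,t-2}$ the sets $E_1(\mathbf u)$, $E_2(\mathbf v)$, $E_3(\mathbf w)$ are pairwise disjoint. If $t$ is even, then for all $\mathbf u,\mathbf v,\mathbf w\in D^*_{n,t-2}$ the sets $E_1(\mathbf u)$, $E_2(\mathbf v)$, $E_3(\mathbf w)$ and $\{1^{t-2}\alpha1:\alpha\in[n]\}$ are pairwise disjoint. Moreover, for each $i\in\{1,2,3\}$, $E_i(\mathbf u)\cap E_i(\mathbf v)=\emptyset$ whenever $\mathbf u\neq\mathbf v$ are in the domain on which $E_i$ is defined.
   Context: For a positive integer $n$ let $[n]=\{1,\dots,n\}$; vertices of the Sierpiński graph $S(K_n,t)$ are words in $[n]^t$. Write $a^k$ for the word consisting of $k$ copies of the letter $a$, and $D^*_{n,s}=D_{n,s}\setminus\{1^s\}$. The sets $D_{n,t}\subseteq[n]^t$ are defined recursively: $D_{n,1}=\{1\}$, $D_{n,2}=\{11,21,\dots,n1\}$. For $t\geq 3$ and $\mathbf v=v_1\cdots v_{t-2}\in D_{n,t-2}$ put $E_1(\mathbf v)=\{v_1\cdots v_{t-2}\alpha\alpha:\alpha\in[n]\}$, $E_2(\mathbf v)=\{v_1\cdots v_{t-3}\alpha\beta v_{t-2}:\alpha,\beta\in[n]\setminus\{v_{t-2}\}\}$, and, if $\mathbf v$ is not a constant word, let $\ell$ be the largest index in $[t-3]$ with $v_\ell\neq v_{\ell+1}$ and put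 $E_3(\mathbf v)=\{v_1\cdots v_{\ell-1}v_{\ell+1}v_\ell^{\,t-\ell-2}\alpha v_\ell:\alpha\in[n]\setminus\{v_\ell\}\}$. If $t\geq 3$ is odd, $D_{n,t}=E_1(1^{t-2})\cup E_2(1^{t-2})\cup\bigcup_{\mathbf v\in D_{n,t-2}\setminus\{1^{t-2}\}}\big(E_1(\mathbf v)\cup E_2(\mathbf v)\cup E_3(\mathbf v)\big)$. If $t\geq 4$ is even, $D_{n,t}=\{1^{t-2}\alpha1:\alpha\in[n]\}\cup\bigcup_{\mathbf v\in D_{n,t-2}\setminus\{1^{t-2}\}}\big(E_1(\mathbf v)\cup E_2(\mathbf v)\cup E_3(\mathbf v)\big)$. (In this recursion $1^{t-2}\in D_{n,t-2}$ is the only constant word in $D_{n,t-2}$, so $E_3$ is applied only to non-constant words.) Here $E_1,E_2$ are defined on $D_{n,t-2}$ and $E_3$ on $D^*_{n,t-2}$. *)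

(* Defs.v *)
(* Words in [n]^t are represented as sequences of naturals
   (letters 1..n), sets of words as sequences (lists) of words. *)
From mathcomp Require Import all_boot.
Set Implicit Arguments. Unset Strict Implicit. Unset Printing Implicit Defensive.

Definition letters (n : nat) : seq nat := iota 1 n.

Definition cw (k a : nat) : seq nat := nseq k a.

Definition E1 (n : nat) (v : seq nat) : seq (seq nat) :=
  [seq v ++ [:: a; a] | a <- letters n].

Definition E2 (n : nat) (v : seq nat) : seq (seq nat) :=
  let x := last 0 v in
  let p := take (size v).-1 v in
  flatten [seq [seq p ++ [:: a; b; x] | b <- letters n & b != x] |
             a <- letters n & a != x].

(* 0-based index j = l - 1 of the largest l in [t-3] (= [size v - 1]) with
   v_l <> v_{l+1}; None if v is constant. *)
Definition lastchange (v : seq nat) : option nat :=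
  let js := [seq j <- iota 0 (size v).-1 | nth 0 v j != nth 0 v j.+1] in
  if js is [::] then None else Some (last 0 js).

(* E_3(v) = { v_1 ... v_{l-1} v_{l+1} v_l^{t-l-2} alpha v_l : alpha in [n] \ {v_l} }
   (t = size v + 2); only meaningful for non-constant v (empty otherwise). *)
Definition E3 (n : nat) (v : seq nat) : seq (seq nat) :=
  match lastchange v with
  | None => [::]
  | Some j =>
      let vl := nth 0 v j in
      let vl1 := nth 0 v j.+1 in
      let l := j.+1 in
      [seq take j v ++ [:: vl1] ++ cw (size v + 2 - l - 2) vl ++ [:: a; vl] |
         a <- letters n & a != vl]
  end.

Definition F (n k : nat) : seq (seq nat) :=
  [seq cw k 1 ++ [:: a; 1] | a <- letters n].

(* The recursive step, for t = k + 2 with prev = D_{n,k}. *)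
Definition Dstep (n k : nat) (prev : seq (seq nat)) : seq (seq nat) :=
  let rest := flatten [seq E1 n v ++ E2 n v ++ E3 n v | v <- prev & v != cw k 1] in
  if odd (k + 2) then E1 n (cw k 1) ++ E2 n (cw k 1) ++ rest
  else F n k ++ rest.

Fixpoint D (n t : nat) {struct t} : seq (seq nat) :=
  match t with
  | 0 => [::]
  | 1 => [:: [:: 1]]
  | S (S t2) =>
      match t2 with
      | 0 => [seq [:: a; 1] | a <- letters n]
      | S _ => Dstep n t2 (D n t2)
      end
  end.

Definition Dstar (n s : nat) : seq (seq nat) := [seq w <- D n s | w != cw s 1].

Definition disjoint_words (A B : seq (seq nat)) : Prop :=
  forall x, x \in A -> x \in B -> False.

(* Main.v *)
Require Import Defs.
From mathcomp Require Import all_boot.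
From mathcomp Require Import zify.

Lemma rcons2_inj (s1 s2 : seq nat) a1 a2 b1 b2 :
  rcons (rcons s1 a1) b1 = rcons (rcons s2 a2) b2 -> [/\ s1 = s2, a1 = a2 & b1 = b2].
Proof. by move/rcons_inj => [/rcons_inj [-> ->] ->]. Qed.

Lemma rcons3_inj (s1 s2 : seq nat) a1 a2 b1 b2 c1 c2 :
  rcons (rcons (rcons s1 a1) b1) c1 = rcons (rcons (rcons s2 a2) b2) c2 ->
  [/\ s1 = s2, a1 = a2, b1 = b2 & c1 = c2].
Proof. by move/rcons_inj => [/rcons_inj [/rcons_inj [-> ->] ->] ->]. Qed.

Lemma nseqSr (m c : nat) : nseq m.+1 c = rcons (nseq m c) c.
Proof. by elim: m => //= m ->. Qed.

Lemma memE1 n u x : x \in E1 n u -> exists a, x = rcons (rcons u a) a.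
Proof. by move=> /mapP [a _ ->]; exists a; rewrite -!cats1 -catA. Qed.

Lemma memE2 n v x : x \in E2 n v -> exists a b, [/\ a != last 0 v, b != last 0 v &
  x = rcons (rcons (rcons (take (size v).-1 v) a) b) (last 0 v)].
Proof.
rewrite /E2 => /flattenP [s /mapP [a]]; rewrite mem_filter => /andP [ha _] ->.
move=> /mapP [b]; rewrite mem_filter => /andP [hb _] ->.
by exists a, b; split => //; rewrite -!cats1 -!catA.
Qed.

Lemma path_le_last (x : nat) s : path leq x s -> forall y, y \in x :: s -> y <= last x s.
Proof.
elim: s x => [|z s IH] x /=.
  by move=> _ y; rewrite mem_seq1 => /eqP ->.
move=> /andP [hxz hp] y; rewrite in_cons => /orP [/eqP ->|hy].
  by apply: leq_trans hxz _; apply: IH => //; rewrite mem_head.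
by apply: IH.
Qed.

Lemma lc_spec v j : lastchange v = Some j ->
  [/\ j < (size v).-1, nth 0 v j != nth 0 v j.+1 &
      forall i, j < i -> i < (size v).-1 -> nth 0 v i = nth 0 v i.+1].
Proof.
rewrite /lastchange.
set js := [seq j <- iota 0 (size v).-1 | nth 0 v j != nth 0 v j.+1].
have srt : sorted leq js.
  apply: sorted_filter; first exact: leq_trans.
  exact: iota_sorted.
have memjs : forall i, (i \in js) = (i < (size v).-1) && (nth 0 v i != nth 0 v i.+1).
  by move=> i; rewrite mem_filter mem_iota add0n andbC.
case E: js srt => [|y s] //= srt [<-].
have hl : last y s \in js by rewrite E; apply: mem_last.
move: (hl); rewrite memjs => /andP [h1 h2]; split => // i hi1 hi2.
apply/eqP; apply/negPn/negP => hne.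
have : i \in js by rewrite memjs hi2 hne.
rewrite E => /(@path_le_last _ _ srt).
by rewrite leqNgt hi1.
Qed.
Arguments lc_spec {v j}.

Lemma memE3 n w x : x \in E3 n w -> exists j a m,
  [/\ lastchange w = Some j, a != nth 0 w j, size w - j.+1 = m.+1 &
  x = rcons (rcons (rcons (take j w) (nth 0 w j.+1) ++ nseq m.+1 (nth 0 w j)) a) (nth 0 w j)].
Proof.
rewrite /E3; case H: (lastchange w) => [j|] //.
move=> /mapP [a]; rewrite mem_filter => /andP [ha _] ->.
have [h1 _ _] := lc_spec H.
exists j, a, (size w - j.+1).-1; split => //; first lia.
have -> : (size w - j.+1).-1.+1 = size w + 2 - j.+1 - 2 by lia.
by rewrite /cw -!cats1 -!catA.
Qed.

Lemma memF n k x : x \in F n k.+1 -> exists a,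
  x = rcons (rcons (rcons (nseq k 1) 1) a) 1.
Proof. by move=> /mapP [a _ ->]; exists a; rewrite /cw nseqSr -!cats1 -!catA. Qed.

Lemma split_nseq (Q Q' : seq nat) d d' c m m' :
  rcons Q d ++ nseq m c = rcons Q' d' ++ nseq m' c -> d != c -> d' != c ->
  [/\ Q = Q', d = d' & m = m'].
Proof.
elim: m m' => [|m IH] [|m'].
- by rewrite !cats0 => /rcons_inj [-> ->].
- by rewrite cats0 nseqSr -rcons_cat => /rcons_inj [_ ->]; rewrite eqxx.
- by rewrite cats0 nseqSr -rcons_cat => /rcons_inj [_ ->] _; rewrite eqxx.
- rewrite !nseqSr -!rcons_cat => /rcons_inj [h] hd hd'.
  by have [-> -> ->] := IH _ h hd hd'; split.
Qed.

Lemma lc_struct u j : lastchange u = Some j ->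
  u = rcons (take j u) (nth 0 u j) ++ nseq (size u - j.+1) (nth 0 u j.+1).
Proof.
move=> H; have [h1 h2 h3] := lc_spec H.
rewrite -take_nth; last by lia.
rewrite -{1}(cat_take_drop j.+1 u); congr (_ ++ _).
apply: (@eq_from_nth _ 0); first by rewrite size_drop size_nseq.
rewrite size_drop => i hi; rewrite nth_drop nth_nseq hi.
elim: i hi => [|i IH] hi; first by rewrite addn0.
rewrite -IH; last by lia.
rewrite addnS; symmetry; apply: h3; lia.
Qed.
Arguments lc_struct {u j}.

Lemma E1E2 n u v : disjoint_words (E1 n u) (E2 n v).
Proof.
move=> x /memE1 [a ->] /memE2 [b [c [hb hc]]] /rcons2_inj [_ e1 e2].
by move: hc; rewrite -e1 e2 eqxx.
Qed.

Lemma E1E3 n u w : disjoint_words (E1 n u) (E3 n w).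
Proof.
move=> x /memE1 [a ->] /memE3 [j [b [m [_ hb _]]]] /rcons2_inj [_ e1 e2].
by move: hb; rewrite -e1 e2 eqxx.
Qed.

Lemma E2E3 n v w : disjoint_words (E2 n v) (E3 n w).
Proof.
move=> x /memE2 [a [b [ha hb ->]]] /memE3 [j [c [m [_ _ _]]]].
rewrite nseqSr -rcons_cat => /rcons3_inj [_ e1 _ e2].
by move: ha; rewrite e1 e2 eqxx.
Qed.

Lemma E1F n k u : u != cw k.+1 1 -> disjoint_words (E1 n u) (F n k.+1).
Proof.
move=> hu x /memE1 [a ->] /memF [b] /rcons2_inj [e _ _].
by move: hu; rewrite e /cw nseqSr eqxx.
Qed.

Lemma E2F n k v : disjoint_words (E2 n v) (F n k.+1).
Proof.
move=> x /memE2 [a [b [ha hb ->]]] /memF [c] /rcons3_inj [_ e1 _ e2].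
by move: ha; rewrite e1 e2 eqxx.
Qed.

Lemma E3F n k w : disjoint_words (E3 n w) (F n k.+1).
Proof.
move=> x /memE3 [j [a [m [H _ _ ->]]]] /memF [c].
rewrite nseqSr -rcons_cat => /rcons3_inj [e _ _ e2].
have [_ hne _] := lc_spec H.
have : nth 0 w j.+1 \in nseq k 1.
  by rewrite -e mem_cat mem_rcons mem_head.
rewrite mem_nseq => /andP [_ /eqP e3].
by move: hne; rewrite e2 e3 eqxx.
Qed.

Lemma E1inj n u v : u != v -> disjoint_words (E1 n u) (E1 n v).
Proof.
move=> huv x /memE1 [a ->] /memE1 [b] /rcons2_inj [e _ _].
by move: huv; rewrite e eqxx.
Qed.

Lemma take_last (u : seq nat) : u != [::] -> rcons (take (size u).-1 u) (last 0 u) = u.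
Proof.
case/lastP: u => // s z _.
have -> : take (size (rcons s z)).-1 (rcons s z) = s by rewrite size_rcons -cats1 take_size_cat.
by rewrite last_rcons.
Qed.

Lemma E2inj n u v : u != [::] -> v != [::] -> u != v -> disjoint_words (E2 n u) (E2 n v).
Proof.
move=> hu hv huv x /memE2 [a [b [_ _ ->]]] /memE2 [c [d [_ _]]] /rcons3_inj [e _ _ e2].
by move: huv; rewrite -(@take_last u hu) -(@take_last v hv) e e2 eqxx.
Qed.

Lemma E3inj n u v : u != v -> disjoint_words (E3 n u) (E3 n v).
Proof.
move=> huv x /memE3 [j [a [m [H ha hm ->]]]] /memE3 [j' [b [m' [H' hb hm' /rcons2_inj [e _ ec]]]]].
have [h1 h2 _] := lc_spec H; have [h1' h2' _] := lc_spec H'.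
rewrite ec in e.
have hd : nth 0 u j.+1 != nth 0 v j' by rewrite -ec eq_sym.
have hd' : nth 0 v j'.+1 != nth 0 v j' by rewrite eq_sym.
have [et ed em] := @split_nseq _ _ _ _ _ _ _ e hd hd'.
have sj : size (take j u) = j by rewrite size_takel // (leq_trans (ltnW h1)) ?leq_pred.
have sj' : size (take j' v) = j' by rewrite size_takel // (leq_trans (ltnW h1')) ?leq_pred.
have ejj : j = j' by rewrite -sj -sj' et.
subst j'.
have es : @size nat u = @size nat v.
  move: hm hm' em; clear; lia.
move: huv; rewrite (lc_struct H) (lc_struct H') -et -ec -ed es eqxx //.
Qed.

Lemma E_nonempty n v x :
  x \in E1 n v ++ E2 n v ++ E3 n v -> x != [::].
Proof.
rewrite !mem_cat => /orP [/memE1 [a ->]|/orP [/memE2 [a [b [_ _ ->]]]|/memE3 [j [a [m [_ _ _ ->]]]]]];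
  by rewrite -size_eq0 size_rcons.
Qed.

Lemma D_nonempty n k x : 0 < k -> x \in D n k -> x != [::].
Proof.
case: k => [|[|[|k]]] //= _.
- by rewrite mem_seq1 => /eqP ->.
- by move=> /mapP [a _ ->].
rewrite /Dstep; set rest := flatten _.
have hr : x \in rest -> x != [::].
  move=> /flattenP [s /mapP [v _ ->]]; exact: E_nonempty.
case: ifP => _; rewrite ?catA mem_cat => /orP [h|h]; try exact: hr h.
- by apply: (@E_nonempty n (cw k.+1 1) x); rewrite catA mem_cat h.
- move: h => /mapP [a _ ->]; by rewrite -size_eq0 size_cat addnS.
Qed.

Theorem lemma2p3 (n t : nat) : 3 <= n -> 3 <= t ->
  (odd t ->
    forall u v w, u \in D n (t - 2) -> v \in D n (t - 2) -> w \in Dstar n (t - 2) ->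
      [/\ disjoint_words (E1 n u) (E2 n v),
          disjoint_words (E1 n u) (E3 n w) &
          disjoint_words (E2 n v) (E3 n w)]) /\
  (~~ odd t ->
    forall u v w, u \in Dstar n (t - 2) -> v \in Dstar n (t - 2) -> w \in Dstar n (t - 2) ->
      [/\ disjoint_words (E1 n u) (E2 n v),
          disjoint_words (E1 n u) (E3 n w),
          disjoint_words (E2 n v) (E3 n w) &
       [/\
          disjoint_words (E1 n u) (F n (t - 2)),
          disjoint_words (E2 n v) (F n (t - 2)) &
          disjoint_words (E3 n w) (F n (t - 2))]]) /\
  (forall u v, u \in D n (t - 2) -> v \in D n (t - 2) -> u != v ->
      disjoint_words (E1 n u) (E1 n v) /\ disjoint_words (E2 n u) (E2 n v)) /\
  (forall u v, u \in Dstar n (t - 2) -> v \in Dstar n (t - 2) -> u != v ->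
      disjoint_words (E3 n u) (E3 n v)).
Proof.
move=> _ ht; split; [|split; [|split]].
- move=> _ u v w _ _ _; split; [exact: E1E2|exact: E1E3|exact: E2E3].
- move=> _ u v w hu _ _.
  have e2 : t - 2 = (t - 3).+1 by lia.
  move: hu; rewrite mem_filter => /andP [hu _].
  rewrite e2 in hu *.
  split; [exact: E1E2|exact: E1E3|exact: E2E3|split].
  + exact: E1F.
  + exact: E2F.
  + exact: E3F.
- move=> u v hu hv huv; split; first exact: E1inj.
  apply: E2inj => //; apply: (@D_nonempty n (t - 2)) => //; lia.
- by move=> u v _ _ huv; apply: E3inj.
Qed.
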